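(* Let $V$ be a commutative unital quantale whose underlying lattice is a frame. If $(X,a,+)$ and $(Y,b,+)$ are $V$-groups and $f\colon X\to Y$ is a group homomorphism, then $f$ is a $V$-functor if and only if $a(0,x)\le b(0,f(x))$ for every $x\in X$.
   Context: A commutative unital quantale $V$ is a complete lattice with a commutative associative operation $\otimes$ with unit $k$ preserving arbitrary joins in each variable. A $V$-category $(X,a)$: $a\colon X\times X\to V$ with $k\le a(x,x)$ and $a(x,x')\otimes a(x',x'')\le a(x,x'')$. A $V$-functor $f\colon(X,a)\to(Y,b)$ satisfies $a(x,x')\le b(f(x),f(x'))$ for all $x,x'$. A $V$-group $(X,a,+)$ is a $V$-category with a group structure (additive, not necessarily abelian) such that $a(x_1,x_2)\otimes a(x_1',x_2')\le a(x_1+x_1',x_2+x_2')$. *)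

(* Defs.v *)
(** Commutative unital quantale: a complete lattice (partial order with
    arbitrary joins of subsets, given as predicates), with a commutative
    associative operation [qtens] with unit [qk] preserving arbitrary joins
    in each variable (by commutativity, preservation in the right variable
    suffices). *)
Record quantale := Quantale {
  qcar :> Type;
  qle : qcar -> qcar -> Prop;
  qle_refl : forall x, qle x x;
  qle_trans : forall x y z, qle x y -> qle y z -> qle x z;
  qle_antisym : forall x y, qle x y -> qle y x -> x = y;
  qsup : (qcar -> Prop) -> qcar;
  qsup_ub : forall (S : qcar -> Prop) x, S x -> qle x (qsup S);
  qsup_least : forall (S : qcar -> Prop) y,
      (forall x, S x -> qle x y) -> qle (qsup S) y;
  qtens : qcar -> qcar -> qcar;
  qk : qcar;
  qtensA : forall x y z, qtens x (qtens y z) = qtens (qtens x y) z;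
  qtensC : forall x y, qtens x y = qtens y x;
  qtens1 : forall x, qtens qk x = x;
  qtens_sup : forall x (S : qcar -> Prop),
      qtens x (qsup S) = qsup (fun z => exists y, S y /\ z = qtens x y)
}.

Definition qmeet (V : quantale) (x y : V) : V :=
  qsup V (fun z => qle V z x /\ qle V z y).

Definition is_frame (V : quantale) : Prop :=
  forall (x : V) (S : V -> Prop),
    qmeet V x (qsup V S) = qsup V (fun z => exists y, S y /\ z = qmeet V x y).

Record group := Group {
  gcar :> Type;
  gadd : gcar -> gcar -> gcar;
  gzero : gcar;
  gopp : gcar -> gcar;
  gaddA : forall x y z, gadd x (gadd y z) = gadd (gadd x y) z;
  gadd0l : forall x, gadd gzero x = x;
  gadd0r : forall x, gadd x gzero = x;
  gaddNl : forall x, gadd (gopp x) x = gzero;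
  gaddNr : forall x, gadd x (gopp x) = gzero
}.

Definition group_hom (X Y : group) (f : X -> Y) : Prop :=
  forall x y, f (gadd X x y) = gadd Y (f x) (f y).

Definition is_Vcat (V : quantale) (X : Type) (a : X -> X -> V) : Prop :=
  (forall x, qle V (qk V) (a x x)) /\
  (forall x x' x'', qle V (qtens V (a x x') (a x' x'')) (a x x'')).

Definition is_Vfunctor (V : quantale) (X Y : Type)
  (a : X -> X -> V) (b : Y -> Y -> V) (f : X -> Y) : Prop :=
  forall x x', qle V (a x x') (b (f x) (f x')).

Definition is_Vgroup (V : quantale) (X : group) (a : X -> X -> V) : Prop :=
  is_Vcat V X a /\
  (forall x1 x2 x1' x2',
      qle V (qtens V (a x1 x2) (a x1' x2')) (a (gadd X x1 x1') (gadd X x2 x2'))).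

(* Main.v *)
Require Import Defs.
From Stdlib Require Import Setoid.

Lemma tens_monr (V : quantale) (w u v : V) :
  qle V u v -> qle V (qtens V w u) (qtens V w v).
Proof.
  intros Huv.
  set (S := fun z : V => z = u \/ z = v).
  assert (HS : qsup V S = v).
  { apply qle_antisym.
    - apply qsup_least. intros x [-> | ->]; [exact Huv | apply qle_refl].
    - apply qsup_ub. right; reflexivity. }
  rewrite <- HS, qtens_sup. apply qsup_ub. exists u. split; [left; reflexivity | reflexivity].
Qed.

Lemma hom0 (X Y : group) (f : X -> Y) : group_hom X Y f -> f (gzero X) = gzero Y.
Proof.
  intros Hf.
  assert (H : f (gzero X) = gadd Y (f (gzero X)) (f (gzero X))).
  { rewrite <- Hf, gadd0l. reflexivity. }
  assert (H2 : gadd Y (gopp Y (f (gzero X))) (f (gzero X)) =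
               gadd Y (gopp Y (f (gzero X))) (gadd Y (f (gzero X)) (f (gzero X)))).
  { rewrite <- H. reflexivity. }
  rewrite gaddA, gaddNl, gadd0l in H2. symmetry; exact H2.
Qed.

Lemma homN (X Y : group) (f : X -> Y) : group_hom X Y f ->
  forall x, f (gopp X x) = gopp Y (f x).
Proof.
  intros Hf x.
  assert (H : gadd Y (f (gopp X x)) (f x) = gzero Y).
  { rewrite <- Hf, gaddNl. apply hom0; exact Hf. }
  rewrite <- (gadd0r Y (f (gopp X x))), <- (gaddNr Y (f x)), gaddA, H, gadd0l.
  reflexivity.
Qed.

Theorem corollary3p3 (V : quantale) (HV : is_frame V)
  (X Y : group) (a : X -> X -> V) (b : Y -> Y -> V)
  (Ha : is_Vgroup V X a) (Hb : is_Vgroup V Y b)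
  (f : X -> Y) (Hf : group_hom X Y f) :
  is_Vfunctor V X Y a b f <->
  (forall x : X, qle V (a (gzero X) x) (b (gzero Y) (f x))).
Proof.
  destruct Ha as [[Ha1 Ha2] Ha3]. destruct Hb as [[Hb1 Hb2] Hb3].
  split.
  - intros H x. rewrite <- (hom0 X Y f Hf). apply H.
  - intros H x x'.
    apply qle_trans with (a (gzero X) (gadd X (gopp X x) x')).
    { apply qle_trans with (qtens V (a (gopp X x) (gopp X x)) (a x x')).
      - assert (E : a x x' = qtens V (a x x') (qk V)) by (rewrite qtensC, qtens1; reflexivity).
        rewrite E at 1. rewrite (qtensC V (a (gopp X x) _)).
        apply tens_monr. apply Ha1.
      - replace (gzero X) with (gadd X (gopp X x) x) by apply gaddNl. apply Ha3. }
    apply qle_trans with (b (gzero Y) (f (gadd X (gopp X x) x'))); [apply H|].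
    rewrite Hf, homN by exact Hf.
    apply qle_trans with (qtens V (b (f x) (f x)) (b (gzero Y) (gadd Y (gopp Y (f x)) (f x')))).
    + set (t := b (gzero Y) _).
      assert (E : t = qtens V t (qk V)) by (rewrite qtensC, qtens1; reflexivity).
      rewrite E at 1. rewrite (qtensC V (b (f x) (f x))).
      apply tens_monr. apply Hb1.
    + eapply qle_trans; [apply Hb3|].
      rewrite gadd0r, gaddA, gaddNr, gadd0l. apply qle_refl.
Qed.
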